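(* Let $D$ be a double extended meta-interpreter, $P$ a definite program, $Q_0$ an atomic query of the language of $P$, and $u_1,\dots,u_n$ terms. Then for every call $\mathit{solve}(Q,t_1,\dots,t_n)\in\mathrm{Call}(D\cup\mathit{ce}^D(P),\mathit{solve}(Q_0,u_1,\dots,u_n))$ there exists a call $\mathit{solve}(G)\in\mathrm{Call}(M_0\cup\mathit{ce}(P),\mathit{solve}(Q_0))$ such that $Q$ is an instance of $G$.
   Context: Logic programs are definite; LD-derivations use the leftmost selection rule. For a program $P$ and a set of queries $S$, $\mathrm{Call}(P,S)$ is the set of atoms $A$ such that a variant of $A$ is a selected atom in some branch of the LD-tree of $P\cup\{Q\}$ for some $Q\in S$; $\mathrm{Call}(P,Q)=\mathrm{Call}(P,\{Q\})$. A double extended meta-interpreter is a definite program consisting of three clauses of the form $\mathit{solve}(\mathit{true},t_{11},\dots,t_{1n})\leftarrow C_{11},\dots,C_{1m_1}.$ $\mathit{solve}((A,B),t_{21},\dots,t_{2n})\leftarrow D_{11},\dots,D_{1k_1},\mathit{solve}(A,t_{31},\dots,t_{3n}),D_{21},\dots,D_{2k_2},\mathit{solve}(B,t_{41},\dots,t_{4n}),C_{21},\dots,C_{2m_2}.$ $\mathit{solve}(A,t_{51},\dots,t_{5n})\leftarrow D_{31},\dots,D_{3k_3},\mathit{clause}(A,B,s_1,\dots,s_k),D_{41},\dots,D_{4k_4},\mathit{solve}(B,t_{61},\dots,t_{6n}),C_{31},\dots,C_{3m_3}.$ where $A,B$ are variables (the meta-variables), the $t_{ij},s_j$ are terms, together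 with clauses defining the other predicates occurring in the atoms $C_{kl},D_{pq}$, none of which contain $\mathit{solve}$ or $\mathit{clause}$. A clause body $B_1,\dots,B_m$ is encoded as the term $(B_1,(B_2,\dots,B_m))$ using the binary functor $,/2$ and an empty body as $\mathit{true}$; $\mathit{ce}(P)$ is the set of facts $\mathit{clause}(H,B)$, one per clause $H\leftarrow B$ of $P$; $\mathit{ce}^D(P)$ is a set of facts $\mathit{clause}(H,B,s_1,\dots,s_k)$ such that for every clause $H\leftarrow B$ of $P$ there is a unique fact of the form $\mathit{clause}(H,B,\dots)$ in it and every fact in it comes from a clause of $P$. The symbols $,/2$, $\mathit{clause}$, $\mathit{solve}$ do not occur in the language of $P$. The ``vanilla'' meta-interpreter $M_0$ is: $\mathit{solve}(\mathit{true}).$ $\mathit{solve}((A,B))\leftarrow\mathit{solve}(A),\mathit{solve}(B).$ $\mathit{solve}(H)\leftarrow\mathit{clause}(H,B),\mathit{solve}(B).$ *)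

(* Defs.v *)
From Stdlib Require Import List Relations.
Import ListNotations.

(** Symbols (function and predicate symbols share one name space, as in
    Prolog; arity is given by the length of the argument list). *)
Inductive sym : Type := Comma | TrueS | Solve | ClauseS | Sym (i : nat).

Inductive term : Type :=
| Var (x : nat)
| Fn (f : sym) (args : list term).

Definition is_atom (t : term) : Prop := exists f args, t = Fn f args.

Fixpoint subst (s : nat -> term) (t : term) : term :=
  match t with
  | Var x => s x
  | Fn f args => Fn f (map (subst s) args)
  end.

Fixpoint vars (t : term) : list nat :=
  match t with
  | Var x => [x]
  | Fn _ args => flat_map vars args
  end.

Fixpoint syms (t : term) : list sym :=
  match t with
  | Var _ => []
  | Fn f args => f :: flat_map syms args
  end.

(** A definite clause [H <- B1,...,Bm] : head and list of body atoms. *)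
Definition clause : Type := (term * list term)%type.
Definition program : Type := list clause.

Definition definite_clause (c : clause) : Prop :=
  is_atom (fst c) /\ Forall is_atom (snd c).
Definition definite_program (P : program) : Prop := Forall definite_clause P.

Definition clause_terms (c : clause) : list term := fst c :: snd c.

Definition renaming (r : nat -> nat) : Prop :=
  exists r', forall x, r (r' x) = x /\ r' (r x) = x.
Definition ren (r : nat -> nat) : nat -> term := fun x => Var (r x).
Definition rename_clause (r : nat -> nat) (c : clause) : clause :=
  (subst (ren r) (fst c), map (subst (ren r)) (snd c)).

Definition variant (a b : term) : Prop :=
  exists r, renaming r /\ subst (ren r) b = a.

Definition instance (a g : term) : Prop := exists s, subst s g = a.

Definition unifier (th : nat -> term) (a b : term) : Prop :=
  subst th a = subst th b.
Definition mgu (th : nat -> term) (a b : term) : Prop :=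
  unifier th a b /\
  forall s, unifier s a b -> exists d, forall x, s x = subst d (th x).

Definition ld_step (P : program) (Q Q' : list term) : Prop :=
  exists (A : term) (rest : list term) (c : clause) (r : nat -> nat)
         (th : nat -> term),
    Q = A :: rest /\ In c P /\ renaming r /\
    (forall x, In x (flat_map vars (clause_terms (rename_clause r c))) ->
               ~ In x (flat_map vars Q)) /\
    mgu th A (fst (rename_clause r c)) /\
    Q' = map (subst th) (snd (rename_clause r c) ++ rest).

Definition ld_node (P : program) (Q Q' : list term) : Prop :=
  clos_refl_trans _ (ld_step P) Q Q'.

Definition Call (P : program) (Q : list term) (A : term) : Prop :=
  exists B rest, ld_node P Q (B :: rest) /\ variant B A.

Fixpoint enc_body (bs : list term) : term :=
  match bs with
  | [] => Fn TrueS []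
  | [b] => b
  | b :: bs' => Fn Comma [b; enc_body bs']
  end.

Definition ce (P : program) : program :=
  map (fun c => (Fn ClauseS [fst c; enc_body (snd c)], [])) P.

Definition ceD_fact (c : clause) (ss : list term) : clause :=
  (Fn ClauseS (fst c :: enc_body (snd c) :: ss), []).

Definition is_ceD (P : program) (k : nat) (F : program) : Prop :=
  (forall c, In c P ->
     exists ss, length ss = k /\ In (ceD_fact c ss) F /\
       (forall ss', In (ceD_fact c ss') F -> ss' = ss)) /\
  (forall f, In f F -> exists c ss, In c P /\ length ss = k /\ f = ceD_fact c ss).

(** The vanilla meta-interpreter M0 (meta-variables A = Var 0, B = Var 1). *)
Definition M0 : program :=
  [ (Fn Solve [Fn TrueS []], []);
    (Fn Solve [Fn Comma [Var 0; Var 1]], [Fn Solve [Var 0]; Fn Solve [Var 1]]);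
    (Fn Solve [Var 0], [Fn ClauseS [Var 0; Var 1]; Fn Solve [Var 1]]) ].

Record dmi : Type := {
  dn : nat; dk : nat;
  va : nat; vb : nat;                   (* the meta-variables A, B *)
  t1 : list term; t2 : list term; t3 : list term;
  t4 : list term; t5 : list term; t6 : list term;
  sk : list term;
  C1 : list term; C2 : list term; C3 : list term;
  D1 : list term; D2 : list term; D3 : list term; D4 : list term;
  aux : program                         (* clauses defining the other predicates *)
}.

Definition no_solve_clause (t : term) : Prop :=
  ~ In Solve (syms t) /\ ~ In ClauseS (syms t).

Definition wf_dmi (D : dmi) : Prop :=
  va D <> vb D /\
  length (t1 D) = dn D /\ length (t2 D) = dn D /\ length (t3 D) = dn D /\
  length (t4 D) = dn D /\ length (t5 D) = dn D /\ length (t6 D) = dn D /\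
  length (sk D) = dk D /\
  Forall (fun t => is_atom t /\ no_solve_clause t)
    (C1 D ++ C2 D ++ C3 D ++ D1 D ++ D2 D ++ D3 D ++ D4 D) /\
  definite_program (aux D) /\
  Forall (fun c => Forall no_solve_clause (clause_terms c)) (aux D).

Definition dmi_prog (D : dmi) : program :=
  [ (Fn Solve (Fn TrueS [] :: t1 D), C1 D);
    (Fn Solve (Fn Comma [Var (va D); Var (vb D)] :: t2 D),
       D1 D ++ [Fn Solve (Var (va D) :: t3 D)] ++ D2 D ++
       [Fn Solve (Var (vb D) :: t4 D)] ++ C2 D);
    (Fn Solve (Var (va D) :: t5 D),
       D3 D ++ [Fn ClauseS (Var (va D) :: Var (vb D) :: sk D)] ++ D4 D ++
       [Fn Solve (Var (vb D) :: t6 D)] ++ C3 D) ]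
  ++ aux D.

Definition in_lang_P (t : term) : Prop :=
  ~ In Comma (syms t) /\ ~ In Solve (syms t) /\ ~ In ClauseS (syms t).
Definition program_in_lang (P : program) : Prop :=
  Forall (fun c => Forall in_lang_P (clause_terms c)) P.

(* Main.v *)
Require Import Defs.
From Stdlib Require Import List Arith Lia Relations.
Import ListNotations.

Definition term_rect' (P : term -> Prop) (HV : forall x, P (Var x))
  (HF : forall f args, Forall P args -> P (Fn f args)) : forall t, P t :=
  fix F t := match t with
  | Var x => HV x
  | Fn f args => HF f args ((fix G (l : list term) : Forall P l :=
      match l with
      | [] => Forall_nil P
      | a :: l' => @Forall_cons _ P a l' (F a) (G l')
      end) args)
  end.

Lemma subst_ext s1 s2 t : (forall x, In x (vars t) -> s1 x = s2 x) -> subst s1 t = subst s2 t.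
Proof.
  revert s1 s2. induction t as [x|f args IH] using term_rect'; intros s1 s2 H; simpl.
  - apply H; simpl; auto.
  - f_equal. apply map_ext_in. intros a Ha. rewrite Forall_forall in IH.
    apply IH; auto. intros y Hy. apply H. simpl. apply in_flat_map. eauto.
Qed.

Lemma subst_comp s1 s2 t : subst s2 (subst s1 t) = subst (fun x => subst s2 (s1 x)) t.
Proof.
  induction t as [x|f args IH] using term_rect'; simpl; auto.
  f_equal. rewrite map_map. apply map_ext_in. intros a Ha. rewrite Forall_forall in IH. auto.
Qed.

Lemma subst_id t : subst Var t = t.
Proof.
  induction t as [x|f args IH] using term_rect'; simpl; auto.
  f_equal. transitivity (map (fun x => x) args); [|apply map_id].
  apply map_ext_in. intros a Ha. rewrite Forall_forall in IH. auto.
Qed.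

Lemma vars_subst s t y : In y (vars (subst s t)) -> exists z, In z (vars t) /\ In y (vars (s z)).
Proof.
  induction t as [x|f args IH] using term_rect'; simpl; intros H.
  - exists x. auto.
  - apply in_flat_map in H. destruct H as [u [Hu Hy]]. apply in_map_iff in Hu.
    destruct Hu as [a [<- Ha]]. rewrite Forall_forall in IH.
    destruct (IH a Ha Hy) as [z [Hz1 Hz2]]. exists z. split; auto.
    apply in_flat_map. eauto.
Qed.

Fixpoint tsize (t : term) : nat :=
  match t with Var _ => 1 | Fn _ args => S (list_sum (map tsize args)) end.

Lemma in_sum a l : In a l -> tsize a <= list_sum (map tsize l).
Proof. induction l; simpl; intros H; [contradiction|]. destruct H; subst; [lia|]. apply IHl in H. lia. Qed.

Lemma size_subst_var s t x : In x (vars t) -> tsize (s x) <= tsize (subst s t).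
Proof.
  induction t as [y|f args IH] using term_rect'; simpl; intros H.
  - destruct H as [->|[]]. lia.
  - apply in_flat_map in H. destruct H as [a [Ha Hx]]. rewrite Forall_forall in IH.
    pose proof (IH a Ha Hx). pose proof (in_sum (subst s a) (map (subst s) args) (in_map _ _ _ Ha)). lia.
Qed.

Lemma occurs_neq s x t : In x (vars t) -> t <> Var x -> s x <> subst s t.
Proof.
  intros H Hne Heq. destruct t as [y|f args].
  - simpl in H. destruct H as [->|[]]. auto.
  - simpl in H. apply in_flat_map in H. destruct H as [a [Ha Hx]].
    pose proof (size_subst_var s a x Hx).
    pose proof (in_sum (subst s a) (map (subst s) args) (in_map _ _ _ Ha)).
    apply (f_equal tsize) in Heq. simpl in Heq. lia.
Qed.

Definition eqs := list (term * term).
Definition unif (s : nat -> term) (E : eqs) := Forall (fun p => subst s (fst p) = subst s (snd p)) E.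
Definition evars (E : eqs) := flat_map (fun p => vars (fst p) ++ vars (snd p)) E.
Definition esize (E : eqs) := list_sum (map (fun p => tsize (fst p) + tsize (snd p)) E).
Definition nv E := length (nodup Nat.eq_dec (evars E)).
Definition MGU E := exists th, unif th E /\ forall s, unif s E -> exists d, forall x, s x = subst d (th x).

Lemma nv_le E1 E2 : incl (evars E1) (evars E2) -> nv E1 <= nv E2.
Proof.
  intros H. unfold nv. apply NoDup_incl_length. apply NoDup_nodup.
  intros y Hy. apply nodup_In. apply nodup_In in Hy. auto.
Qed.

Lemma nv_lt E1 E2 x : incl (evars E1) (evars E2) -> In x (evars E2) -> ~ In x (evars E1) -> nv E1 < nv E2.
Proof.
  intros H Hx Hn. unfold nv.
  apply Nat.le_lt_trans with (length (remove Nat.eq_dec x (nodup Nat.eq_dec (evars E2)))).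
  - apply NoDup_incl_length. apply NoDup_nodup.
    intros y Hy. apply nodup_In in Hy. apply in_in_remove.
    + intros ->. auto.
    + apply nodup_In. auto.
  - apply remove_length_lt. apply nodup_In. auto.
Qed.

Lemma var_case x t E0 :
  (forall E', nv E' < nv ((Var x, t) :: E0) -> (exists s, unif s E') -> MGU E') ->
  (exists s, unif s ((Var x, t) :: E0)) -> t <> Var x -> MGU ((Var x, t) :: E0).
Proof.
  intros IH [s0 Hs0] Hne.
  assert (Hnx : ~ In x (vars t)).
  { intros Hin. inversion Hs0; subst. simpl in H1. eapply occurs_neq; eauto. }
  set (sb := fun y => if Nat.eq_dec y x then t else Var y).
  assert (Key : forall s, s x = subst s t -> forall u, subst s (subst sb u) = subst s u).
  { intros s Hs u. rewrite subst_comp. apply subst_ext. intros y _. unfold sb.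
    destruct (Nat.eq_dec y x); subst; simpl; auto. }
  assert (Hsbt : subst sb t = t).
  { rewrite <- (subst_id t) at 2. apply subst_ext. intros y Hy. unfold sb.
    destruct (Nat.eq_dec y x); subst; tauto. }
  set (E' := map (fun p => (subst sb (fst p), subst sb (snd p))) E0).
  assert (Hlift : forall s, unif s ((Var x, t) :: E0) -> unif s E').
  { intros s Hs. inversion Hs; subst. simpl in H1. unfold E', unif.
    apply Forall_forall. intros p Hp. apply in_map_iff in Hp. destruct Hp as [q [<- Hq]].
    simpl. rewrite !Key by auto. unfold unif in H2. rewrite Forall_forall in H2. auto. }
  assert (Hsbv : forall u y, In y (vars (subst sb u)) -> y <> x /\ (In y (vars t) \/ In y (vars u))).
  { intros u y Hy. apply vars_subst in Hy. destruct Hy as [z [Hz Hyz]]. unfold sb in Hyz.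
    destruct (Nat.eq_dec z x).
    - split; [intros ->; auto|]. auto.
    - simpl in Hyz. destruct Hyz as [->|[]]. auto. }
  assert (Hnv : nv E' < nv ((Var x, t) :: E0)).
  { apply nv_lt with x.
    - intros y Hy. unfold E', evars in Hy. apply in_flat_map in Hy.
      destruct Hy as [p [Hp Hy]]. apply in_map_iff in Hp. destruct Hp as [q [<- Hq]].
      simpl in Hy. simpl. right.
      assert (Hq' : forall z, In z (vars (fst q) ++ vars (snd q)) -> In z (evars E0)).
      { intros z Hz. unfold evars. apply in_flat_map. eauto. }
      apply in_app_iff in Hy. destruct Hy as [Hy|Hy]; apply Hsbv in Hy;
        destruct Hy as [_ [Hy|Hy]]; apply in_app_iff; auto; right; apply Hq'; apply in_app_iff; auto.
    - simpl. auto.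
    - intros Hy. unfold E', evars in Hy. apply in_flat_map in Hy.
      destruct Hy as [p [Hp Hy]]. apply in_map_iff in Hp. destruct Hp as [q [<- Hq]].
      simpl in Hy. apply in_app_iff in Hy. destruct Hy as [Hy|Hy]; apply Hsbv in Hy; tauto. }
  destruct (IH E' Hnv (ex_intro _ s0 (Hlift s0 Hs0))) as [th' [Hth' Hgen]].
  exists (fun y => subst th' (sb y)). split.
  - constructor.
    + simpl. rewrite <- subst_comp, Hsbt. unfold sb. destruct (Nat.eq_dec x x); [|congruence]. reflexivity.
    + unfold unif in Hth' |- *. rewrite Forall_forall in Hth' |- *. intros p Hp.
      rewrite <- !subst_comp. apply (Hth' (subst sb (fst p), subst sb (snd p))).
      unfold E'. apply in_map_iff. eauto.
  - intros s Hs. destruct (Hgen s (Hlift s Hs)) as [d Hd]. exists d. intros y.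
    inversion Hs; subst. simpl in H1.
    rewrite subst_comp. rewrite <- (subst_ext s). 2: { intros z _. auto. }
    unfold sb. destruct (Nat.eq_dec y x); subst; auto.
Qed.

Lemma unif_swap s a b E0 : unif s ((a,b)::E0) <-> unif s ((b,a)::E0).
Proof. split; intros H; inversion H; subst; constructor; auto. Qed.

Lemma MGU_swap a b E0 : MGU ((b,a)::E0) -> MGU ((a,b)::E0).
Proof.
  intros [th [H1 H2]]. exists th. split; [apply unif_swap; auto|].
  intros s Hs. apply H2. apply unif_swap. auto.
Qed.

Lemma nv_swap a b E0 : nv ((b,a)::E0) = nv ((a,b)::E0).
Proof.
  apply Nat.le_antisymm; apply nv_le; intros y; unfold evars; simpl;
    rewrite !in_app_iff; tauto.
Qed.

Lemma combine_unif s a b : length a = length b ->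
  (map (subst s) a = map (subst s) b <-> unif s (combine a b)).
Proof.
  revert b; induction a as [|x a IH]; intros [|y b] Hl; simpl in *; try discriminate.
  - split; intros; constructor.
  - injection Hl as Hl. split.
    + intros H. injection H as H1 H2. constructor; auto. apply IH; auto.
    + intros H. inversion H; subst. f_equal; auto. apply IH; auto.
Qed.

Lemma combine_size a b : length a = length b ->
  esize (combine a b) = list_sum (map tsize a) + list_sum (map tsize b).
Proof.
  revert b; induction a as [|x a IH]; intros [|y b] Hl; simpl in *; try discriminate; auto.
  injection Hl as Hl. unfold esize in *. simpl. rewrite IH; auto. lia.
Qed.

Lemma esize_app E1 E2 : esize (E1 ++ E2) = esize E1 + esize E2.
Proof. unfold esize. rewrite map_app, list_sum_app. auto. Qed.

Lemma unif_app s E1 E2 : unif s (E1 ++ E2) <-> unif s E1 /\ unif s E2.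
Proof. unfold unif. apply Forall_app. Qed.

Lemma unify_main : forall n m E, nv E < n -> esize E < m -> (exists s, unif s E) -> MGU E.
Proof.
  induction n as [|n IHn]; [intros; lia|].
  induction m as [|m IHm]; [intros; lia|].
  intros E Hn Hm Hs.
  assert (IHv : forall E', nv E' < nv E -> (exists s, unif s E') -> MGU E').
  { intros E' H1 H2. apply (IHn (S (esize E'))); auto. lia. }
  destruct E as [|[a b] E0].
  - exists Var. split; [constructor|]. intros s _. exists s. auto.
  - destruct a as [x|f args]; destruct b as [y|g brgs].
    + destruct (Nat.eq_dec x y) as [<-|Hxy].
      * assert (HM : MGU E0).
        { apply IHm.
          - eapply Nat.le_lt_trans; [|apply Hn]. apply nv_le. intros z Hz. unfold evars; simpl.
            right; right; exact Hz.
          - unfold esize in Hm. simpl in Hm. unfold esize. lia.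
          - destruct Hs as [s Hs]. exists s. inversion Hs; auto. }
        destruct HM as [th [H1 H2]]. exists th. split.
        -- constructor; auto.
        -- intros s Hs'. apply H2. inversion Hs'; auto.
      * apply var_case; auto. congruence.
    + apply var_case; auto. discriminate.
    + apply MGU_swap. apply var_case.
      * rewrite nv_swap. auto.
      * destruct Hs as [s Hs]. exists s. apply unif_swap. auto.
      * discriminate.
    + destruct Hs as [s0 Hs0]. inversion Hs0 as [|? ? Hh Ht]; subst. simpl in Hh.
      injection Hh as Hfg Hmap. subst g.
      assert (Hl : length args = length brgs).
      { rewrite <- (length_map (subst s0) args), Hmap. apply length_map. }
      assert (Heq : forall s, unif s ((Fn f args, Fn f brgs) :: E0) <-> unif s (combine args brgs ++ E0)).
      { intros s. rewrite unif_app. split.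
        - intros H. inversion H; subst. simpl in H2. injection H2 as H2. split; auto.
          apply combine_unif; auto.
        - intros [H1 H2]. constructor; auto. simpl. f_equal. apply combine_unif; auto. }
      assert (HM : MGU (combine args brgs ++ E0)).
      { apply IHm.
        - eapply Nat.le_lt_trans; [|apply Hn]. apply nv_le. intros z Hz.
          unfold evars in Hz. rewrite flat_map_app, in_app_iff in Hz. unfold evars. simpl.
          rewrite !in_app_iff. destruct Hz as [Hz|Hz]; [|auto].
          apply in_flat_map in Hz. destruct Hz as [[u v] [Huv Hz]]. simpl in Hz.
          apply in_app_iff in Hz. left. destruct Hz as [Hz|Hz].
          + left. apply in_flat_map. exists u. split; auto. eapply in_combine_l; eauto.
          + right. apply in_flat_map. exists v. split; auto. eapply in_combine_r; eauto.
        - rewrite esize_app, combine_size by auto. unfold esize in Hm |- *. simpl in Hm. lia.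
        - exists s0. apply Heq. auto. }
      destruct HM as [th [H1 H2]]. exists th. split.
      * apply Heq; auto.
      * intros s Hs. apply H2. apply Heq. auto.
Qed.

Theorem unify_mgu a b : (exists s, subst s a = subst s b) -> exists th, mgu th a b.
Proof.
  intros [s Hs].
  destruct (unify_main (S (nv [(a,b)])) (S (esize [(a,b)])) [(a,b)]) as [th [H1 H2]]; auto.
  - exists s. constructor; auto.
  - exists th. split.
    + inversion H1; auto.
    + intros s' Hs'. apply H2. constructor; auto.
Qed.

Definition sw (N x : nat) : nat :=
  if x <? N then x + N else if x <? N + N then x - N else x.

Lemma sw_inv N x : sw N (sw N x) = x.
Proof.
  unfold sw. destruct (Nat.ltb_spec x N).
  - destruct (Nat.ltb_spec (x + N) N); [lia|]. destruct (Nat.ltb_spec (x + N) (N + N)); lia.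
  - destruct (Nat.ltb_spec x (N + N)).
    + destruct (Nat.ltb_spec (x - N) N); lia.
    + destruct (Nat.ltb_spec x N); [lia|]. destruct (Nat.ltb_spec x (N + N)); lia.
Qed.

Definition maxl (l : list nat) := fold_right max 0 l.
Lemma maxl_ge l x : In x l -> x <= maxl l.
Proof. induction l; simpl; intros H; [contradiction|]. destruct H; subst; [lia|]. apply IHl in H. lia. Qed.

Lemma vstep (Pv : program) (Av : term) (V' : list term) (c : clause) (f tau : nat -> term) :
  In c Pv -> subst f Av = subst tau (fst c) ->
  exists V'' d, ld_step Pv (Av :: V') V'' /\
     map (subst d) V'' = map (subst tau) (snd c) ++ map (subst f) V'.
Proof.
  intros Hc Heq.
  set (N := S (maxl (flat_map vars (Av :: V' ++ clause_terms c)))).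
  assert (HQ : forall x, In x (flat_map vars (Av :: V')) -> x < N).
  { intros x Hx. unfold N. apply Nat.lt_succ_r. apply maxl_ge.
    rewrite app_comm_cons, flat_map_app, in_app_iff. auto. }
  assert (HC : forall x, In x (flat_map vars (clause_terms c)) -> x < N).
  { intros x Hx. unfold N. apply Nat.lt_succ_r. apply maxl_ge.
    rewrite app_comm_cons, flat_map_app, in_app_iff. auto. }
  set (r := sw N).
  set (s := fun y => if y <? N then f y else tau (y - N)).
  assert (Hren : forall t, (forall x, In x (vars t) -> x < N) -> subst s (subst (ren r) t) = subst tau t).
  { intros t Ht. rewrite subst_comp. apply subst_ext. intros x Hx. simpl. unfold s, r, sw.
    specialize (Ht x Hx). destruct (x <? N) eqn:E; [|apply Nat.ltb_ge in E; lia].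
    destruct (x + N <? N) eqn:E2; [apply Nat.ltb_lt in E2; lia|]. f_equal. lia. }
  assert (Hq : forall t, (forall x, In x (vars t) -> x < N) -> subst s t = subst f t).
  { intros t Ht. apply subst_ext. intros x Hx. unfold s. specialize (Ht x Hx).
    destruct (x <? N) eqn:E; auto. apply Nat.ltb_ge in E; lia. }
  assert (Hhead : subst s Av = subst s (fst (rename_clause r c))).
  { simpl. rewrite Hq, Hren; auto.
    - intros x Hx. apply HC. simpl. apply in_app_iff. auto.
    - intros x Hx. apply HQ. simpl. apply in_app_iff. auto. }
  destruct (unify_mgu _ _ (ex_intro _ s Hhead)) as [th Hth].
  destruct Hth as [Hu Hg]. destruct (Hg s Hhead) as [d Hd].
  exists (map (subst th) (snd (rename_clause r c) ++ V')), d. split.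
  - exists Av, V', c, r, th. split; [auto|]. split; [auto|]. split; [|split; [|split; [split; auto|auto]]].
    + exists r. intros x. unfold r. rewrite !sw_inv. auto.
    + intros x Hx1 Hx2. apply HQ in Hx2.
      apply in_flat_map in Hx1. destruct Hx1 as [u [Hu1 Hu2]].
      unfold clause_terms, rename_clause in Hu1. simpl in Hu1.
      assert (Hu3 : exists w, In w (clause_terms c) /\ u = subst (ren r) w).
      { destruct Hu1 as [<-|Hu1]. exists (fst c). split; simpl; auto.
        apply in_map_iff in Hu1. destruct Hu1 as [w [<- Hw]]. exists w. split; simpl; auto. }
      destruct Hu3 as [w [Hw ->]]. apply vars_subst in Hu2. destruct Hu2 as [z [Hz Hxz]].
      simpl in Hxz. destruct Hxz as [Hxz|[]].
      assert (z < N) by (apply HC; apply in_flat_map; eauto).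
      unfold r, sw in Hxz. destruct (z <? N) eqn:E; [|apply Nat.ltb_ge in E; lia]. lia.
  - rewrite map_map, map_app. f_equal.
    + simpl. rewrite map_map. apply map_ext_in. intros t Ht.
      rewrite subst_comp. rewrite <- (subst_ext s). 2: { intros; auto. }
      apply Hren. intros x Hx. apply HC. apply in_flat_map. exists t. split; simpl; auto.
    + apply map_ext_in. intros t Ht.
      rewrite subst_comp. rewrite <- (subst_ext s). 2: { intros; auto. }
      apply Hq. intros x Hx. apply HQ. simpl. rewrite in_app_iff. right. apply in_flat_map. eauto.
Qed.

Definition proj1 (t : term) : list term :=
  match t with
  | Fn Solve (q :: _) => [Fn Solve [q]]
  | Fn ClauseS (a :: b :: _) => [Fn ClauseS [a; b]]
  | _ => []
  end.
Definition proj (l : list term) : list term := flat_map proj1 l.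

Lemma proj_app l1 l2 : proj (l1 ++ l2) = proj l1 ++ proj l2.
Proof. apply flat_map_app. Qed.

Lemma proj1_subst th t : is_atom t -> proj1 (subst th t) = map (subst th) (proj1 t).
Proof. intros [f [args ->]]. destruct f; destruct args as [|q [|b l]]; reflexivity. Qed.

Lemma proj_subst th l : Forall is_atom l -> proj (map (subst th) l) = map (subst th) (proj l).
Proof.
  induction 1; simpl; auto. unfold proj in *. simpl. rewrite map_app, <- IHForall.
  rewrite proj1_subst; auto.
Qed.

Lemma proj_other s l : Forall (fun t => is_atom t /\ no_solve_clause t) l -> proj (map (subst s) l) = [].
Proof.
  induction 1 as [|t l [[f [args ->]] [H1 H2]] _ IH]; simpl; auto.
  unfold proj in *. simpl. rewrite IH. simpl in H1, H2.
  destruct f; try (exfalso; auto; fail); reflexivity.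
Qed.

Lemma subst_atom s t : is_atom t -> is_atom (subst s t).
Proof. intros [f [args ->]]. simpl. eexists; eexists; eauto. Qed.

Lemma step_atoms Pr Q Q' : (forall c, In c Pr -> Forall is_atom (snd c)) ->
  ld_step Pr Q Q' -> Forall is_atom Q -> Forall is_atom Q'.
Proof.
  intros HP (A & rest & c & r & th & -> & Hc & _ & _ & _ & ->) HQ.
  inversion HQ; subst. apply Forall_map. apply Forall_app. split.
  - simpl. apply Forall_map. specialize (HP c Hc). rewrite Forall_forall in HP |- *.
    intros t Ht. apply subst_atom. apply subst_atom. auto.
  - rewrite Forall_forall in H2 |- *. intros t Ht. apply subst_atom. auto.
Qed.

Lemma node_atoms Pr Q Q' : (forall c, In c Pr -> Forall is_atom (snd c)) ->
  ld_node Pr Q Q' -> Forall is_atom Q -> Forall is_atom Q'.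
Proof. intros HP H. induction H; eauto using step_atoms. Qed.

Lemma Pv_atoms P : forall c, In c (M0 ++ ce P) -> Forall is_atom (snd c).
Proof.
  intros c Hc. apply in_app_iff in Hc. destruct Hc as [Hc|Hc].
  - simpl in Hc. destruct Hc as [<-|[<-|[<-|[]]]]; simpl; repeat constructor;
      eexists; eexists; eauto.
  - unfold ce in Hc. apply in_map_iff in Hc. destruct Hc as [c' [<- _]]. simpl. constructor.
Qed.

Lemma at_mono (l : list term) : Forall (fun t => is_atom t /\ no_solve_clause t) l -> Forall is_atom l.
Proof. induction 1; constructor; tauto. Qed.

Lemma PD_atoms D F (P : program) : wf_dmi D ->
  (forall f, In f F -> exists c ss, In c P /\ length ss = dk D /\ f = ceD_fact c ss) ->
  forall c, In c (dmi_prog D ++ F) -> Forall is_atom (snd c).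
Proof.
  intros Hwf HF c Hc.
  destruct Hwf as (_ & _ & _ & _ & _ & _ & _ & _ & Hall & Hauxdef & _).
  apply Forall_app in Hall as [HC1 Hall]. apply Forall_app in Hall as [HC2 Hall].
  apply Forall_app in Hall as [HC3 Hall]. apply Forall_app in Hall as [HD1 Hall].
  apply Forall_app in Hall as [HD2 Hall]. apply Forall_app in Hall as [HD3 HD4].
  apply at_mono in HC1, HC2, HC3, HD1, HD2, HD3, HD4.
  assert (HA : forall t, is_atom (Fn Solve t)) by (intros; eexists; eexists; eauto).
  assert (HB : forall t, is_atom (Fn ClauseS t)) by (intros; eexists; eexists; eauto).
  apply in_app_iff in Hc. destruct Hc as [Hc|Hc].
  - unfold dmi_prog in Hc. apply in_app_iff in Hc. destruct Hc as [Hc|Hc].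
    + simpl in Hc. destruct Hc as [<-|[<-|[<-|[]]]]; simpl;
        repeat first [assumption | apply Forall_app; split | constructor]; auto.
    + unfold definite_program in Hauxdef. rewrite Forall_forall in Hauxdef.
      apply Hauxdef in Hc. apply Hc.
  - destruct (HF c Hc) as (c' & ss & _ & _ & ->). constructor.
Qed.

Lemma map_comp_subst th sg l : map (subst (fun y => subst th (sg y))) l = map (subst th) (map (subst sg) l).
Proof. rewrite map_map. apply map_ext. intros. rewrite subst_comp. auto. Qed.

Lemma sim_step D (P : program) ceDP Dq Dq' V sg :
  wf_dmi D ->
  (forall f, In f ceDP -> exists c ss, In c P /\ length ss = dk D /\ f = ceD_fact c ss) ->
  ld_step (dmi_prog D ++ ceDP) Dq Dq' -> Forall is_atom Dq -> map (subst sg) V = proj Dq ->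
  exists V' sg', ld_node (M0 ++ ce P) V V' /\ map (subst sg') V' = proj Dq'.
Proof.
  intros Hwf HF (A & rest & c & r & th & -> & Hc & Hr & _ & [Hu _] & ->) Hat Hinv.
  inversion Hat as [|? ? HA Hrest]; subst.
  destruct HA as [g [args ->]].
  set (s := fun z => th (r z)).
  assert (Hbody : map (subst th) (snd (rename_clause r c)) = map (subst s) (snd c)).
  { simpl. rewrite map_map. apply map_ext. intros t. rewrite subst_comp. auto. }
  assert (Hhead : subst th (fst (rename_clause r c)) = subst s (fst c)).
  { simpl. rewrite subst_comp. auto. }
  unfold unifier in Hu. rewrite Hhead in Hu.
  assert (Hnew : proj (map (subst th) (snd (rename_clause r c) ++ rest)) =
                 proj (map (subst s) (snd c)) ++ map (subst th) (proj rest)).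
  { rewrite map_app, proj_app, Hbody, (proj_subst th rest); auto. }
  rewrite Hnew. clear Hnew Hbody Hhead.
  change (map (subst sg) V = proj1 (Fn g args) ++ proj rest) in Hinv.
  set (f := fun y => subst th (sg y)).
  assert (Hf : forall l, map (subst th) (map (subst sg) l) = map (subst f) l).
  { intros l. unfold f. rewrite map_comp_subst. auto. }
  assert (Hfv : forall v, subst f v = subst th (subst sg v)).
  { intros v. unfold f. rewrite subst_comp. auto. }
  pose proof Hwf as Hwf'.
  destruct Hwf' as (Hvab & _ & _ & _ & _ & _ & _ & _ & Hall & Hauxdef & Hauxns).
  apply Forall_app in Hall as [HC1 Hall]. apply Forall_app in Hall as [HC2 Hall].
  apply Forall_app in Hall as [HC3 Hall]. apply Forall_app in Hall as [HD1 Hall].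
  apply Forall_app in Hall as [HD2 Hall]. apply Forall_app in Hall as [HD3 HD4].
  assert (HPv : forall cv, In cv M0 -> In cv (M0 ++ ce P)) by (intros; apply in_or_app; auto).
  apply in_app_iff in Hc. destruct Hc as [Hc|Hc].
  - unfold dmi_prog in Hc. apply in_app_iff in Hc. destruct Hc as [Hc|Hc].
    + simpl in Hc. destruct Hc as [<-|[<-|[<-|[]]]]; simpl in Hu;
        injection Hu as Hg Hargs; subst g;
        (destruct args as [|q ts]; [discriminate|]); simpl in Hargs; injection Hargs as Hq _;
        simpl in Hinv; (destruct V as [|v V0]; [discriminate|]);
        simpl in Hinv; injection Hinv as Hv HV0.
      * destruct (vstep (M0 ++ ce P) v V0 (Fn Solve [Fn TrueS []], []) f Var) as (V'' & d & Hst & Hd).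
        { apply HPv. simpl. auto. }
        { rewrite Hfv, Hv. simpl. rewrite Hq. reflexivity. }
        exists V'', d. split; [apply rt_step; auto|].
        rewrite Hd. simpl. rewrite proj_other by auto. simpl. rewrite <- HV0, Hf. auto.
      * set (tau := fun z => match z with 0 => s (va D) | _ => s (vb D) end).
        destruct (vstep (M0 ++ ce P) v V0
          (Fn Solve [Fn Comma [Var 0; Var 1]], [Fn Solve [Var 0]; Fn Solve [Var 1]]) f tau)
          as (V'' & d & Hst & Hd).
        { apply HPv. simpl. auto. }
        { rewrite Hfv, Hv. simpl. rewrite Hq. reflexivity. }
        exists V'', d. split; [apply rt_step; auto|].
        rewrite Hd. simpl. repeat progress (rewrite ?map_app, ?proj_app; simpl).
        rewrite !proj_other by auto. simpl. rewrite <- HV0, Hf. auto.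
      * set (tau := fun z => match z with 0 => s (va D) | _ => s (vb D) end).
        destruct (vstep (M0 ++ ce P) v V0
          (Fn Solve [Var 0], [Fn ClauseS [Var 0; Var 1]; Fn Solve [Var 1]]) f tau)
          as (V'' & d & Hst & Hd).
        { apply HPv. simpl. auto. }
        { rewrite Hfv, Hv. simpl. rewrite Hq. reflexivity. }
        exists V'', d. split; [apply rt_step; auto|].
        rewrite Hd. simpl. repeat progress (rewrite ?map_app, ?proj_app; simpl).
        rewrite !proj_other by auto. simpl. rewrite <- HV0, Hf. auto.
    + unfold definite_program in Hauxdef. rewrite Forall_forall in Hauxdef, Hauxns.
      destruct (Hauxdef c Hc) as [[h [hargs Hh]] Hbat].
      pose proof (Hauxns c Hc) as Hns. unfold clause_terms in Hns.
      inversion Hns as [|? ? Hhns Hbns]; subst.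
      rewrite Hh in Hu, Hhns. simpl in Hu. injection Hu as Hg _. subst h.
      destruct Hhns as [Hn1 Hn2]. simpl in Hn1, Hn2.
      assert (Hp1 : proj1 (Fn g args) = []).
      { destruct g; try (exfalso; auto; fail); reflexivity. }
      rewrite Hp1 in Hinv. simpl in Hinv.
      exists V, f. split; [apply rt_refl|].
      rewrite proj_other.
      * simpl. rewrite <- Hf, Hinv. auto.
      * rewrite Forall_forall in Hbat, Hbns |- *. auto.
  - destruct (HF c Hc) as (cP & ss & HcP & _ & ->). simpl in Hu.
    injection Hu as Hg Hargs. subst g.
    destruct args as [|a [|b rargs]]; try discriminate.
    simpl in Hargs. injection Hargs as Ha Hb _.
    simpl in Hinv. destruct V as [|v V0]; [discriminate|].
    simpl in Hinv; injection Hinv as Hv HV0.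
    destruct (vstep (M0 ++ ce P) v V0 (Fn ClauseS [fst cP; enc_body (snd cP)], []) f s)
      as (V'' & d & Hst & Hd).
    { apply in_or_app. right. unfold ce.
      apply (in_map (fun c => (Fn ClauseS [fst c; enc_body (snd c)], []))). auto. }
    { rewrite Hfv, Hv. simpl. rewrite Ha, Hb. reflexivity. }
    exists V'', d. split; [apply rt_step; auto|].
    rewrite Hd. simpl. rewrite <- HV0, Hf. auto.
Qed.

Theorem mainTheorem6 (D : dmi) (P : program) (ceDP : program)
    (Q0 : term) (us : list term) :
  wf_dmi D ->
  definite_program P -> program_in_lang P ->
  is_ceD P (dk D) ceDP ->
  is_atom Q0 -> in_lang_P Q0 ->
  length us = dn D ->
  forall (Q : term) (ts : list term),
    length ts = dn D ->
    Call (dmi_prog D ++ ceDP) [Fn Solve (Q0 :: us)] (Fn Solve (Q :: ts)) ->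
    exists G : term,
      Call (M0 ++ ce P) [Fn Solve [Q0]] (Fn Solve [G]) /\ instance Q G.
Proof.
  intros Hwf _ _ [_ HF] _ _ _ Q ts _ (B & rest & Hnode & Hvar).
  assert (Inv : forall Dq, ld_node (dmi_prog D ++ ceDP) [Fn Solve (Q0 :: us)] Dq ->
     Forall is_atom Dq /\ exists V sg, ld_node (M0 ++ ce P) [Fn Solve [Q0]] V /\
        Forall is_atom V /\ map (subst sg) V = proj Dq).
  { intros Dq H. apply clos_rt_rtn1 in H. induction H as [|y z Hs H IH].
    - split. { constructor; [eexists; eexists; eauto|constructor]. }
      exists [Fn Solve [Q0]], Var. split; [apply rt_refl|]. split.
      { constructor; [eexists; eexists; eauto|constructor]. }
      simpl. rewrite subst_id. reflexivity.
    - destruct IH as [Hy [V [sg [HV [HVa Hm]]]]].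
      split. { eapply step_atoms; eauto. apply (PD_atoms D ceDP P); auto. }
      destruct (sim_step D P ceDP y z V sg Hwf HF Hs Hy Hm) as (V' & sg' & HV' & Hm').
      exists V', sg'. split; [eapply rt_trans; eauto|]. split; auto.
      eapply node_atoms; eauto. apply Pv_atoms. }
  destruct (Inv _ Hnode) as [_ [V [sg [HV [HVa Hm]]]]].
  destruct Hvar as [r [[r' Hr] Hrb]]. subst B.
  change (map (subst sg) V = proj1 (subst (ren r) (Fn Solve (Q :: ts))) ++ proj rest) in Hm.
  simpl in Hm. destruct V as [|v V0]; [discriminate|].
  simpl in Hm. injection Hm as Hv _.
  inversion HVa as [|? ? [f [args Hfa]] _]; subst v.
  simpl in Hv. injection Hv as -> Hargs.
  destruct args as [|G [|? ?]]; try discriminate. simpl in Hargs. injection Hargs as HG.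
  exists G. split.
  - exists (Fn Solve [G]), V0. split; auto.
    exists (fun z => z). split.
    + exists (fun z => z). auto.
    + rewrite <- (subst_id (Fn Solve [G])) at 2. apply subst_ext. auto.
  - exists (fun y => subst (ren r') (sg y)).
    rewrite <- subst_comp, HG, subst_comp. rewrite <- (subst_id Q) at 2.
    apply subst_ext. intros z _. simpl. unfold ren. destruct (Hr z) as [_ ->]. auto.
Qed.
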